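(* Let $G=(V,E)$ be a finite undirected graph without multi-edges and self-loops, with $N=|V|\ge 1$. Suppose that $G$ is removed completely by the leaf-removal algorithm, and let $C\subseteq V$ be the set of vertices covered by the algorithm. Then the linear-programming relaxation $$\min\ \frac{1}{N}\sum_{i\in V}x_i \quad\text{subject to}\quad x_i+x_j\ge 1\ \ \forall (i,j)\in E,\qquad x_i\in[0,1]\ \ \forall i\in V$$ has an optimal solution, and its optimal value equals $|C|/N$, the value obtained by the leaf-removal algorithm.
   Context: The minimum vertex cover problem on $G$ is the integer program: minimize $\frac1N\sum_{i\in V}x_i$ subject to $x_i+x_j\ge 1$ for all $(i,j)\in E$ and $x_i\in\{0,1\}$ for all $i\in V$. Its linear-programming (LP) relaxation replaces $x_i\in\{0,1\}$ by $x_i\in[0,1]$. A leaf is a vertex of degree one. The leaf-removal algorithm works as follows: as long as the current graph contains a leaf $w$, let $v$ be the unique neighbor of $w$; cover $v$ (add it to $C$) and delete $v$ together with all its incident edges from the current graph. The algorithm stops when the remaining graph has no leaf; if edges then remain, all vertices of the remaining non-trivial connected components (the leaf-removal core) are also covered. The graph $G$ is said to be removed completely by leaf removal if, when the algorithm stops, the remaining graph has no edges (the leaf-removal core is empty), so that $C$ consists exactly of the vertices covered during the leaf-removal steps. *)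

(* Defs.v *)
From HB Require Import structures.
From mathcomp Require Import all_boot all_order all_algebra.
Set Implicit Arguments. Unset Strict Implicit. Unset Printing Implicit Defensive.
Import Order.TTheory GRing.Theory Num.Theory.

(* A simple graph on a finite vertex type T: adjacency relation e,
   assumed symmetric and irreflexive in the theorem.  The edge set is
   E = {{i,j} | e i j}. *)

(* Neighbours of w in the current graph, i.e. the subgraph induced on the
   set U of not-yet-deleted vertices. *)
Definition nbrs (T : finType) (e : rel T) (U : {set T}) (w : T) : {set T} :=
  [set u in U | e w u].

(* One leaf-removal step on state (U, C): U = remaining vertices,
   C = covered vertices.  w is a leaf of the current graph (degree one),
   v its unique neighbour; v is covered and deleted with its edges. *)
Inductive lr_reach (T : finType) (e : rel T) : {set T} -> {set T} -> Prop :=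
| lr_start : lr_reach e [set: T] set0
| lr_step (U C : {set T}) (w v : T) :
    lr_reach e U C -> w \in U -> nbrs e U w = [set v] ->
    lr_reach e (U :\ v) (v |: C).

Definition no_edges (T : finType) (e : rel T) (U : {set T}) : Prop :=
  forall i j, i \in U -> j \in U -> ~~ e i j.

Definition lp_feasible (R : realFieldType) (T : finType) (e : rel T)
    (x : T -> R) : Prop :=
  (forall i, 0 <= x i <= 1)%R /\ (forall i j, e i j -> 1 <= x i + x j)%R.

Definition lp_obj (R : realFieldType) (T : finType) (x : T -> R) : R :=
  ((\sum_(i : T) x i) / #|T|%:R)%R.

(* Main.v *)
Require Import Defs.
From HB Require Import structures.
From mathcomp Require Import all_boot all_order all_algebra.
Import Order.TTheory GRing.Theory Num.Theory.

Lemma nbrs0P (T : finType) (e : rel T) (U : {set T}) x :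
  reflect (forall u, u \in U -> ~~ e x u) (nbrs e U x == set0).
Proof.
apply: (iffP eqP) => [H u uU|H].
  by apply/negP => exu; move/setP: H => /(_ u); rewrite !inE uU exu.
apply/setP => u; rewrite !inE; apply/negP => /andP[uU exu].
by move: (H u uU); rewrite exu.
Qed.

Lemma lr_inv {T : finType} {e : rel T} (e_sym : symmetric e)
  (e_irr : irreflexive e) {U C} : lr_reach e U C ->
  exists m : T -> T, [/\ U = ~: C,
    {in C, forall v, [&& e v (m v), m v \in U & nbrs e U (m v) == set0]}
    & {in C &, injective m}].
Proof.
elim => [|{}U {}C w v run [m [HU Hm Hinj]] wU Hnb].
  exists id; split; first by rewrite setC0.
    by move=> v; rewrite inE.
  by move=> a b; rewrite inE.
have hv : v \in nbrs e U w by rewrite Hnb set11.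
move: hv; rewrite inE => /andP[vU ewv].
have wv : w != v by apply/eqP => wv; move: ewv; rewrite wv e_irr.
have vC : v \notin C by move: vU; rewrite HU inE.
have nbw : forall u, u \in U -> e w u -> u = v.
  by move=> u uU ewu; move/setP: Hnb => /(_ u); rewrite !inE uU ewu => /esym/eqP.
have mzv : forall z, z \in C -> m z != v.
  move=> z zC; apply/eqP => mz.
  move: (Hm z zC) => /and3P[_ _ /nbrs0P H].
  by move: (H w wU); rewrite mz e_sym ewv.
exists (fun z => if z == v then w else m z); split.
- apply/setP => z; rewrite !inE HU !inE; by case: (z == v).
- move=> z; rewrite !inE => /orP[/eqP->|zC].
    rewrite eqxx e_sym ewv wv wU /=.
    apply/nbrs0P => u; rewrite !inE => /andP[uv uU]; apply/negP => ewu.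
    by move: uv; rewrite (nbw u uU ewu) eqxx.
  have zv : z != v by apply/eqP => zv; move: vC; rewrite -zv zC.
  rewrite (negbTE zv); move: (Hm z zC) => /and3P[-> mzU /nbrs0P H].
  rewrite (mzv z zC) mzU /=; apply/nbrs0P => u; rewrite !inE => /andP[_ uU].
  exact: H.
- have wm : forall z, z \in C -> w != m z.
    move=> z zC; apply/eqP => wmz.
    move: (Hm z zC) => /and3P[_ _ /nbrs0P H].
    by move: (H v vU); rewrite -wmz ewv.
  move=> a b; rewrite !inE => /orP[/eqP->|aC] /orP[/eqP->|bC] //=; rewrite ?eqxx.
  + have bv : b != v by apply/eqP => bv; move: vC; rewrite -bv bC.
    by rewrite (negbTE bv) => /eqP; rewrite (negbTE (wm b bC)).
  + have av : a != v by apply/eqP => av; move: vC; rewrite -av aC.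
    by rewrite (negbTE av) => /esym/eqP; rewrite (negbTE (wm a aC)).
  + have av : a != v by apply/eqP => av; move: vC; rewrite -av aC.
    have bv : b != v by apply/eqP => bv; move: vC; rewrite -bv bC.
    rewrite (negbTE av) (negbTE bv); exact: Hinj.
Qed.

Theorem theorem1 (R : realFieldType) (T : finType) (e : rel T)
    (e_sym : symmetric e) (e_irr : irreflexive e) (hN : (0 < #|T|)%N)
    (U C : {set T}) (run : lr_reach e U C) (core_empty : no_edges e U) :
  exists x : T -> R,
    [/\ lp_feasible e x,
        (forall y : T -> R, lp_feasible e y -> (lp_obj x <= lp_obj y)%R)
      & lp_obj x = (#|C|%:R / #|T|%:R)%R].
Proof.
have [m [HU Hm Hinj]] := lr_inv e_sym e_irr run.
set x := fun i => if i \in C then 1%R else 0%R : R.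
have objx : lp_obj x = (#|C|%:R / #|T|%:R)%R.
  by rewrite /lp_obj /x -big_mkcond /= sumr_const.
exists x; split => //.
- split.
    by move=> i; rewrite /x; case: (i \in C); rewrite ?ler01 ?lexx.
  move=> i j eij; rewrite /x.
  case iC: (i \in C); case jC: (j \in C); rewrite ?addr0 ?add0r ?lerDl ?ler01 //.
  have iU : i \in U by rewrite HU inE iC.
  have jU : j \in U by rewrite HU inE jC.
  by move: (core_empty i j iU jU); rewrite eij.
- move=> y [y01 yE]; rewrite objx /lp_obj.
  apply: ler_wpM2r; first by rewrite invr_ge0 ler0n.
  have y0 : forall i, (0 <= y i)%R by move=> i; case/andP: (y01 i).
  have dis : [disjoint C & m @: C].
    rewrite -setI_eq0; apply/eqP/setP => z; rewrite !inE.
    apply/negP => /andP[zC /imsetP[a aC za]].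
    move: (Hm a aC) => /and3P[_]; rewrite HU inE -za zC //.
  apply: (@le_trans _ _ (\sum_(i in C) (y i + y (m i)))%R).
    rewrite -sum1_card natr_sum; apply: ler_sum => i iC.
    by apply: yE; case/and3P: (Hm i iC).
  rewrite big_split /= -(big_imset _ Hinj) -bigU //=.
  rewrite [X in (_ <= X)%R](bigID (mem (C :|: m @: C))) /=.
  rewrite (@eq_bigl _ _ _ _ _ _ (mem (C :|: m @: C))); last by move=> i; rewrite !inE.
  by rewrite lerDl sumr_ge0.
Qed.
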